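(* Suppose $n/N\to\lambda$ as $\nu\to\infty$ with $0\le\lambda<1$. Then $n\gamma\to c$ as $\nu\to\infty$ for some $c\ge1-\lambda>0$.
   Context: For a sequence of population sizes $N=N_\nu$ and sample sizes $n=n_\nu<N$ with $N,n\to\infty$, let $N_1,\dots,N_n$ be the group sizes of the RHC design: $N_i=N/n$ for all $i$ if $N/n$ is an integer; otherwise $N_i=\lfloor N/n\rfloor$ for $i=1,\dots,k$ and $N_i=\lfloor N/n\rfloor+1$ for $i=k+1,\dots,n$, with $k$ such that $\sum_{i=1}^nN_i=N$. Define $\gamma=\sum_{i=1}^nN_i(N_i-1)/(N(N-1))$. *)

(* Defs.v *)
From HB Require Import structures.
From mathcomp Require Import all_boot all_order all_algebra.
From mathcomp Require Import all_classical all_reals all_analysis.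
Set Implicit Arguments. Unset Strict Implicit. Unset Printing Implicit Defensive.
Import Order.TTheory GRing.Theory Num.Theory.
Local Open Scope ring_scope.

(* RHC group sizes, indexed 0-based by i : 'I_n (paper's group i+1). *)
Definition rhc_k (N n : nat) : nat := (n - N %% n)%N.

Definition rhc_size (N n : nat) (i : nat) : nat :=
  if (n %| N)%N then (N %/ n)%N
  else (N %/ n + (rhc_k N n <= i))%N.

Definition rhc_gamma {R : realType} (N n : nat) : R :=
  (\sum_(i < n) ((rhc_size N n i) * (rhc_size N n i - 1))%N%:R)
    / ((N * (N - 1))%N%:R).

(* Main.v *)
From HB Require Import structures.
Require Import Defs.
From mathcomp Require Import all_boot all_order all_algebra.
From mathcomp Require Import all_classical all_reals all_analysis.
From mathcomp Require Import zify ring lra.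
Import Order.TTheory GRing.Theory Num.Theory numFieldNormedType.Exports.
Local Open Scope classical_set_scope.
Local Open Scope ring_scope.
Local Open Scope ring_scope.

Lemma sum_rhc (N n : nat) : (0 < n)%N -> (n < N)%N ->
  (\sum_(i < n) ((rhc_size N n i) * (rhc_size N n i - 1)))%N =
  ((n - N %% n) * ((N %/ n) * (N %/ n - 1)) + (N %% n) * ((N %/ n + 1) * (N %/ n)))%N.
Proof.
move=> n0 nN; rewrite /rhc_size; have [dv|ndv] := boolP (n %| N)%N; rewrite ?dv ?(negbTE ndv); first have r0 : (N %% n = 0)%N by apply/eqP.
  by rewrite r0 sum_nat_const card_ord subn0 mul0n addn0.
rewrite -(big_mkord xpredT (fun i => (N %/ n + (rhc_k N n <= i)) * (N %/ n + (rhc_k N n <= i) - 1)))%N.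
rewrite (@big_cat_nat _ _ _ (rhc_k N n) 0 n) /= ?leq_subr //.
rewrite (eq_big_nat _ _ (F2 := fun _ => (N %/ n) * (N %/ n - 1))%N); last first.
  by move=> i /andP[_ lt]; rewrite leqNgt lt /= addn0.
rewrite [X in (_ + X)%N](eq_big_nat _ _ (F2 := fun _ => (N %/ n + 1) * (N %/ n))%N); last first.
  by move=> i /andP[le _]; rewrite le /= addnK.
rewrite !sum_nat_const_nat /rhc_k subn0.
have -> : (n - (n - N %% n) = N %% n)%N by rewrite subKn // ltnW // ltn_mod.
done.
Qed.

Lemma nat_ident (N n : nat) : (0 < n)%N -> (n < N)%N ->
  (n * ((n - N %% n) * ((N %/ n) * (N %/ n - 1)) + (N %% n) * ((N %/ n + 1) * (N %/ n))))%N
  = (N * (N - n) + (N %% n) * (n - N %% n))%N.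
Proof.
move=> n0 nN.
have Ne := divn_eq N n.
have rn : (N %% n < n)%N by rewrite ltn_mod.
have q1 : (0 < N %/ n)%N by rewrite divn_gt0 // ltnW.
move: Ne rn q1; set q := (N %/ n)%N; set r := (N %% n)%N => Ne rn q1.
rewrite Ne.
case: q q1 {Ne} => // q _.
have [s ns] : exists s, n = (r + s.+1)%N by exists (n - r).-1; lia.
have e1 : (n - r = s.+1)%N by rewrite ns addKn.
have e2 : (q.+1 - 1 = q)%N by rewrite subn1.
have e3 : (q.+1 * n + r - n = q * n + r)%N by rewrite mulSn -addnA addKn.
rewrite e1 e2 e3 ns.
ring.
Qed.

Definition frc {R : realType} (x : R) : R := x - (Num.floor x)%:~R.
Definition hh {R : realType} (x : R) : R := frc x * (1 - frc x).

Lemma frc_itv {R : realType} (x : R) : 0 <= frc x < 1.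
Proof.
rewrite /frc subr_ge0 floor_le /= ltrBlDl.
by have := floorD1_gt x; rewrite intrD.
Qed.

Lemma hh_ge0 {R : realType} (x : R) : 0 <= hh x <= 1.
Proof. have /andP[a b] := frc_itv x; rewrite /hh; apply/andP; split; nra. Qed.

Lemma hh_lip_le {R : realType} (x y : R) : x <= y ->
  - (y - x) <= hh x - hh y <= y - x.
Proof.
move=> xy.
have /andP[a0 a1] := frc_itv x; have /andP[b0 b1] := frc_itv y.
have fl := le_floor xy.
move: a0 a1 b0 b1; rewrite /hh /frc.
have [e|lt] := eqVneq (Num.floor x) (Num.floor y).
  rewrite e; set k : R := (Num.floor y)%:~R.
  move: xy; clear; move=> xy a0 a1 b0 b1; apply/andP; split; nra.
have lt' : Num.floor x < Num.floor y by rewrite lt_def eq_sym lt fl.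
have : (Num.floor x + 1)%:~R <= (Num.floor y)%:~R :> R.
  by rewrite ler_int lezD1.
rewrite intrD; set kx : R := (Num.floor x)%:~R; set ky : R := (Num.floor y)%:~R.
move: xy; clear; move=> xy hk a0 a1 b0 b1; apply/andP; split; nra.
Qed.

Lemma hh_lip {R : realType} (x y : R) : `|hh x - hh y| <= `|x - y|.
Proof.
wlog xy : x y / x <= y.
  move=> H; case/orP: (le_total x y) => [xy|yx]; first exact: H.
  by rewrite (distrC (hh x)) (distrC x); apply: H.
have /andP[h1 h2] := hh_lip_le _ _ xy.
rewrite ler_norml (distrC x y) ger0_norm ?subr_ge0 //.
by rewrite h1 h2.
Qed.

Lemma hh_nat {R : realType} (N n : nat) : (0 < n)%N ->
  hh ((N%:R / n%:R) : R) = (N %% n)%:R / n%:R * (1 - (N %% n)%:R / n%:R).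
Proof.
move=> n0.
have n0' : (n%:R : R) != 0 by rewrite pnatr_eq0 -lt0n.
have NE : (N%:R : R) = (N %/ n)%:R * n%:R + (N %% n)%:R.
  by rewrite -natrM -natrD -divn_eq.
have fe : Num.floor ((N%:R / n%:R) : R) = (N %/ n)%:Z.
  apply: floor_def; rewrite -PoszD.
  rewrite /= NE mulrDl mulfK //.
  rewrite lerDl divr_ge0 //= [X in _ < X](_ : _ = (N %/ n)%:R + 1); last by rewrite PoszD intrD.
  rewrite ltrD2l ltr_pdivrMr ?ltr0n // mul1r ltr_nat ltn_mod n0.
  done.
rewrite /hh /frc fe.
have -> : N%:R / n%:R - ((N %/ n)%:Z)%:~R = (N %% n)%:R / n%:R :> R.
  rewrite NE mulrDl mulfK // -[((N %/ n)%:Z)%:~R]/((N %/ n)%:R : R).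
  by rewrite addrAC subrr add0r.
by [].
Qed.

Lemma hh_cvg {R : realType} {T} {F : set_system T} {FF : Filter F} (f : T -> R) y :
  f @ F --> y -> (fun t => hh (f t)) @ F --> hh y.
Proof.
move=> /cvgrPdist_lt H; apply/cvgrPdist_lt => e e0.
near=> t; apply: le_lt_trans (hh_lip _ _) _; near: t; exact: H.
Unshelve. all: end_near.
Qed.

Lemma ident {R : realType} (N n : nat) : (0 < n)%N -> (n < N)%N ->
  n%:R * rhc_gamma N n =
  (1 - n%:R / N%:R + (n%:R / N%:R) * (n%:R / N%:R) * hh ((n%:R / N%:R)^-1))
    / (1 - (N%:R : R)^-1).
Proof.
move=> n0 nN.
rewrite /rhc_gamma -natr_sum sum_rhc // [n%:R * _]mulrA -natrM nat_ident // invf_div hh_nat //.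
have nN' : (n <= N)%N by apply: ltnW.
have rn : (N %% n <= n)%N by apply: ltnW; rewrite ltn_mod.
have N1 : (1 <= N)%N by apply: leq_ltn_trans nN.
rewrite natrD !natrM !natrB //.
set r := (N %% n)%N.
have n0' : (n%:R : R) != 0 by rewrite pnatr_eq0 -lt0n.
have N0' : (N%:R : R) != 0 by rewrite pnatr_eq0 -lt0n.
have N1' : (N%:R : R) - 1 != 0.
  rewrite subr_eq0 pnatr_eq1; apply/negP => /eqP h; move: nN n0; rewrite h; lia.
by field; rewrite N0' N1' n0'.
Qed.

Theorem lemma2 (R : realType) (N n : nat -> nat) (lambda : R)
  (hnN : forall nu, (n nu < N nu)%N)
  (hN : (fun nu => (N nu)%:R : R) @ \oo --> +oo)
  (hn : (fun nu => (n nu)%:R : R) @ \oo --> +oo)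
  (hlam : (fun nu => (n nu)%:R / (N nu)%:R : R) @ \oo --> lambda)
  (hl0 : 0 <= lambda) (hl1 : lambda < 1) :
  exists c : R, 1 - lambda <= c /\
    (fun nu => (n nu)%:R * rhc_gamma (N nu) (n nu) : R) @ \oo --> c.
Proof.
set b := fun nu => (n nu)%:R / (N nu)%:R : R.
have b0 : forall nu, 0 <= b nu by move=> nu; rewrite /b divr_ge0.
have phi : (fun nu => b nu * b nu * hh (b nu)^-1) @ \oo --> lambda * lambda * hh lambda^-1.
  have [l0|l0] := eqVneq lambda 0.
    rewrite l0 !mul0r.
    apply: (@squeeze_cvgr _ _ _ _ (fun=> 0) (fun nu => b nu * b nu)).
    - near=> nu; have /andP[h0 h1] := hh_ge0 (b nu)^-1; have := b0 nu.
      move=> bb; apply/andP; split; nra.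
    - exact: cvg_cst.
    - by have := cvgM hlam hlam; rewrite l0 mul0r; apply.
  apply: (cvgM (cvgM hlam hlam)).
  apply: hh_cvg; exact: cvgV.
have invN : (fun nu => ((N nu)%:R : R)^-1) @ \oo --> 0.
  apply/gtr0_cvgV0 => //; near=> nu; rewrite ltr0n; exact: leq_ltn_trans (hnN nu).
have den : (fun nu => (1 - ((N nu)%:R : R)^-1)^-1) @ \oo --> (1 - 0 : R)^-1.
  apply: cvgV; first by rewrite subr0 oner_neq0.
  apply: cvgB => //; exact: cvg_cst.
have num : (fun nu => 1 - b nu + b nu * b nu * hh (b nu)^-1) @ \oo -->
    1 - lambda + lambda * lambda * hh lambda^-1.
  apply: cvgD => //; apply: cvgB => //; exact: cvg_cst.
exists ((1 - lambda + lambda * lambda * hh lambda^-1) * (1 - 0 : R)^-1); split.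
  rewrite subr0 invr1 mulr1 lerDl; have /andP[h0 _] := hh_ge0 lambda^-1.
  by rewrite mulr_ge0 // mulr_ge0.

apply: (cvg_trans _ (cvgM num den)); apply: near_eq_cvg.
have /cvgryPge hn1 := hn.
near=> nu; rewrite /= ident //.
have : (1 <= (n nu)%:R :> R) by near: nu; apply: hn1.
by rewrite ler1n.
Unshelve. all: end_near.
Qed.
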